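(* Let $a,b$ be positive integers with $a\equiv 0\pmod b$, let $n\geq 1$, and let $G$ be a regular graph. If $aG\circ nK_1$ is distance magic, then $bG\circ \frac{a}{b}(nK_1)$ is distance magic.
   Context: A graph $G$ on $v$ vertices is distance magic if there is a bijection $f:V(G)\to\{1,\ldots,v\}$ and a constant $k$ such that for every vertex $x$, $\sum_{y\in N(x)}f(y)=k$, where $N(x)$ is the set of neighbours of $x$. For a positive integer $c$, $cH$ denotes the disjoint union of $c$ copies of $H$; $nK_1$ is the edgeless graph on $n$ vertices (so $\frac{a}{b}(nK_1)$ is the edgeless graph on $\frac{an}{b}$ vertices). The lexicographic product $G\circ H$ has vertex set $V(G)\times V(H)$, with $(g,h)$ adjacent to $(g',h')$ iff either $gg'\in E(G)$, or $g=g'$ and $hh'\in E(H)$. *)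

(* Defs.v *)
From mathcomp Require Import all_boot.
Unset Printing Implicit Defensive.

Definition simple_graph {T : finType} (adj : rel T) : Prop :=
  symmetric adj /\ irreflexive adj.

Definition regular {T : finType} (adj : rel T) : Prop :=
  exists r : nat, forall x : T, #|[set y | adj x y]| = r.

Definition dunion (c : nat) {T : finType} (adj : rel T) : rel ('I_c * T) :=
  fun u v => (u.1 == v.1) && adj u.2 v.2.

Definition edgeless (n : nat) : rel 'I_n := fun _ _ => false.

Definition lexprod {TG TH : finType} (adjG : rel TG) (adjH : rel TH)
  : rel (TG * TH) :=
  fun u v => adjG u.1 v.1 || ((u.1 == v.1) && adjH u.2 v.2).

(* distance magic: a bijection V -> {1..v} (here x |-> (f x).+1 with
   f : V -> 'I_v bijective) with constant neighbourhood sums *)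
Definition distance_magic {T : finType} (adj : rel T) : Prop :=
  exists f : T -> 'I_#|T|, bijective f /\
    exists k : nat, forall x : T, \sum_(y | adj x y) (nat_of_ord (f y)).+1 = k.

(* Main.v *)
Require Import Defs.
From mathcomp Require Import all_boot.

Lemma card_bij (A B : finType) : #|A| = #|B| -> exists h : A -> B, bijective h.
Proof.
move=> E.
exists (fun x => enum_val (cast_ord E (enum_rank x))).
exists (fun y => enum_val (cast_ord (esym E) (enum_rank y))).
- by move=> x /=; rewrite enum_valK cast_ordK enum_rankK.
- by move=> y /=; rewrite enum_valK cast_ordKV enum_rankK.
Qed.

Theorem theorem15 (a b n : nat) (T : finType) (adj : rel T) :
  0 < a -> 0 < b -> b %| a -> 1 <= n ->
  simple_graph adj -> regular adj ->
  distance_magic (lexprod (dunion a adj) (edgeless n)) ->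
  distance_magic (lexprod (dunion b adj) (edgeless ((a %/ b) * n))).
Proof.
move=> a0 b0 dba n1 _ _ [f [[g fK gK] [k hk]]].
set c := a %/ b.
have ea : a = b * c by rewrite /c mulnC divnK.
have [e1 [e1i e1K e1iK]] : exists e1 : 'I_a -> 'I_b * 'I_c, bijective e1.
  by apply: card_bij; rewrite card_prod !card_ord.
have [e2 [e2i e2K e2iK]] : exists e2 : 'I_c * 'I_n -> 'I_(c*n), bijective e2.
  by apply: card_bij; rewrite card_prod !card_ord.
pose psi (x : ('I_a * T) * 'I_n) : ('I_b * T) * 'I_(c*n) :=
  (((e1 x.1.1).1, x.1.2), e2 ((e1 x.1.1).2, x.2)).
pose phi (y : ('I_b * T) * 'I_(c*n)) : ('I_a * T) * 'I_n :=
  let p := e2i y.2 in ((e1i (y.1.1, p.1), y.1.2), p.2).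
have psiK : cancel psi phi.
  move=> [[i t] j]; rewrite /psi /phi /= e2K /= -surjective_pairing e1K //.
have phiK : cancel phi psi.
  move=> [[i t] j]; rewrite /phi /psi /= e1iK /= -surjective_pairing e2iK //.
have EC : #|{: ('I_b * T) * 'I_(c*n)}| = #|{: ('I_a * T) * 'I_n}|.
  by rewrite !card_prod !card_ord ea -!mulnA; congr (_ * _); rewrite mulnCA mulnA.
exists (fun y => cast_ord (esym EC) (f (phi y))); split.
  exists (fun m => psi (g (cast_ord EC m))).
  - by move=> y /=; rewrite cast_ordKV fK phiK.
  - by move=> m /=; rewrite psiK gK cast_ordK.
exists (c * k) => y.
rewrite (reindex psi) /=; last by apply: onW_bij; exists phi.
under eq_bigr do rewrite psiK.
rewrite (partition_big (fun x => (e1 x.1.1).2) predT) //=.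
transitivity (\sum_(r < c) k); last by rewrite sum_nat_const card_ord.
apply: eq_bigr => r _.
rewrite -(hk ((e1i (y.1.1, r), y.1.2), Ordinal n1)).
apply: eq_bigl => x.
case: y => [[i' t] j']; case: x => [[i t2] j2].
rewrite /lexprod /dunion /edgeless /= !andbF !orbF.
have -> : (e1i (i', r) == i) = ((i', r) == e1 i).
  by apply/eqP/eqP => [<-|->]; rewrite ?e1iK ?e1K.
case: (e1 i) => u v /=.
rewrite xpair_eqE (eq_sym v).
by case: (_ == _); case: (adj _ _); case: (_ == _).
Qed.
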